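(* If a link $L\subset\mathbb{R}^3$ has thickness $\tau>0$, then its secant map $S$ has Lipschitz constant $1/(2\tau)$ on $(L\times L)\setminus\Delta$. Consequently $L$ is $C^{1,1}$.
   Context: A link is a disjoint union of finitely many simple closed curves in $\mathbb{R}^3$. For distinct $x,y,z\in\mathbb{R}^3$, $r(x,y,z)$ is the radius of the circle through them ($\infty$ if collinear); the thickness is $\tau(L)=\inf r(x,y,z)$ over pairwise distinct $x,y,z\in L$. The secant map is $S(x,y)=\pm\frac{x-y}{|x-y|}\in\mathbb{R}P^2$ for $x\neq y\in L$; $\Delta$ is the diagonal of $L\times L$. Metrics: on $L\times L$, the sum of the (shorter) arclength distances in the two factors; on $\mathbb{R}P^2$, the distance between two points is $\sin\theta$, where $\theta$ is the angle between lifts of the points to $S^2$. $C^{1,1}$ is with respect to the constant-speed parametrization. *)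

(* Defs.v *)
From Stdlib Require Import Reals Lra.
From Coquelicot Require Import Coquelicot.
Open Scope R_scope.

Definition point := (R * R * R)%type.
Definition px (p : point) : R := fst (fst p).
Definition py (p : point) : R := snd (fst p).
Definition pz (p : point) : R := snd p.
Definition vsub (p q : point) : point := (px p - px q, py p - py q, pz p - pz q).
Definition vdot (p q : point) : R := px p * px q + py p * py q + pz p * pz q.
Definition vnorm (p : point) : R := sqrt (vdot p p).
Definition vdist (p q : point) : R := vnorm (vsub p q).
Definition vcross (p q : point) : point :=
  (py p * pz q - pz p * py q, pz p * px q - px p * pz q, px p * py q - py p * px q).
Definition vscale (a : R) (p : point) : point := (a * px p, a * py p, a * pz p).

(** A link with [n] components: component [i < n] is the image of a
    continuous 1-periodic map [g i : R -> R^3] which is injective on [0,1)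
    (a simple closed curve); distinct components are disjoint. *)
Definition is_link (n : nat) (g : nat -> R -> point) : Prop :=
  (forall i, (i < n)%nat ->
     (forall t, continuity_pt (fun u => px (g i u)) t /\
                continuity_pt (fun u => py (g i u)) t /\
                continuity_pt (fun u => pz (g i u)) t) /\
     (forall t, g i (t + 1) = g i t) /\
     (forall s t, 0 <= s < 1 -> 0 <= t < 1 -> g i s = g i t -> s = t)) /\
  (forall i j s t, (i < n)%nat -> (j < n)%nat -> i <> j -> g i s <> g j t).

Definition on_link (n : nat) (g : nat -> R -> point) (x : point) : Prop :=
  exists i s, (i < n)%nat /\ x = g i s.

Definition circumradius (x y z : point) : Rbar :=
  let c := vnorm (vcross (vsub y x) (vsub z x)) in
  if Req_EM_T c 0 then p_infty
  else Finite (vdist x y * vdist y z * vdist z x / (2 * c)).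

Definition thickness (n : nat) (g : nat -> R -> point) : Rbar :=
  Glb_Rbar (fun r : R => exists x y z,
     on_link n g x /\ on_link n g y /\ on_link n g z /\
     x <> y /\ y <> z /\ x <> z /\ circumradius x y z = Finite r).
(* Note: Glb_Rbar over reals; collinear triples contribute +oo, which does
   not affect the infimum (and the infimum is +oo if all are collinear). *)

Fixpoint psum (h : nat -> R) (k : nat) : R :=
  match k with O => 0 | S k' => psum h k' + h k' end.

Definition polygon_length (f : R -> point) (a b : R) (v : R) : Prop :=
  exists (k : nat) (p : nat -> R),
    p O = a /\ p k = b /\ (forall j, (j < k)%nat -> p j <= p (S j)) /\
    v = psum (fun j => vdist (f (p j)) (f (p (S j)))) k.

Definition arclength (f : R -> point) (a b : R) : Rbar :=
  Lub_Rbar (polygon_length f a b).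

(** Shorter arclength distance between the points with parameters s,t in [0,1)
    of the closed curve f (1-periodic). *)
Definition arc_dist (f : R -> point) (s t : R) : Rbar :=
  Rbar_min (arclength f (Rmin s t) (Rmax s t))
           (arclength f (Rmax s t) (Rmin s t + 1)).

(** Secant map S(x,y) = +-(x-y)/|x-y| in RP^2 (a unit lift), and the
    RP^2 distance sin(theta), theta the angle between lifts. *)
Definition secant (x y : point) : point := vscale (/ vdist x y) (vsub x y).
Definition rp2_dist (u v : point) : R := sin (acos (vdot u v)).

(** C^{1,1} with respect to a constant-speed parametrization, for component i. *)
Definition component_C11 (f : R -> point) : Prop :=
  exists (c c' : R -> point),
    (forall t, c (t + 1) = c t) /\
    (forall s t, 0 <= s < 1 -> 0 <= t < 1 -> c s = c t -> s = t) /\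
    (forall x, (exists s, x = f s) <-> (exists t, x = c t)) /\
    (forall t, is_derive (fun u => px (c u)) t (px (c' t)) /\
               is_derive (fun u => py (c u)) t (py (c' t)) /\
               is_derive (fun u => pz (c u)) t (pz (c' t))) /\
    (exists v, forall t, vnorm (c' t) = v) /\
    (exists K, forall s t, vdist (c' s) (c' t) <= K * Rabs (s - t)).

(* Main.v *)
Require Import Defs.
From Stdlib Require Import Reals Lra Psatz Classical ClassicalEpsilon ZArith List.
From Coquelicot Require Import Coquelicot.
Open Scope R_scope.
Open Scope list_scope.

Definition vadd (p q : point) : point := (px p + px q, py p + py q, pz p + pz q).

Ltac vunf := unfold vadd, vdot, vnorm, vdist, vsub, vcross, vscale, px, py, pz in *; simpl in *.

Lemma vdot_ge0 a : 0 <= vdot a a.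
Proof. destruct a as [[a1 a2] a3]; vunf; nra. Qed.

Lemma vnorm_ge0 a : 0 <= vnorm a.
Proof. unfold vnorm; apply sqrt_pos. Qed.

Lemma vnorm_sq a : vnorm a * vnorm a = vdot a a.
Proof. unfold vnorm; apply sqrt_sqrt, vdot_ge0. Qed.

Lemma le_of_sq x y : 0 <= y -> x * x <= y * y -> x <= y.
Proof. intros; nra. Qed.

Lemma lagrange a b :
  vdot (vcross a b) (vcross a b) + vdot a b * vdot a b = vdot a a * vdot b b.
Proof. destruct a as [[a1 a2] a3]; destruct b as [[b1 b2] b3]; vunf; ring. Qed.

Lemma cs_sq a b : vdot a b * vdot a b <= vdot a a * vdot b b.
Proof. rewrite <- lagrange. pose proof (vdot_ge0 (vcross a b)); lra. Qed.

Lemma cs a b : Rabs (vdot a b) <= vnorm a * vnorm b.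
Proof.
  apply le_of_sq. pose proof (vnorm_ge0 a); pose proof (vnorm_ge0 b); nra.
  rewrite <- Rabs_mult, Rabs_mult, <- Rabs_mult. rewrite Rabs_pos_eq.
  replace (vnorm a * vnorm b * (vnorm a * vnorm b)) with
    ((vnorm a * vnorm a) * (vnorm b * vnorm b)) by ring.
  rewrite !vnorm_sq. apply cs_sq. nra.
Qed.

Lemma cross_le a b : vnorm (vcross a b) <= vnorm a * vnorm b.
Proof.
  apply le_of_sq. pose proof (vnorm_ge0 a); pose proof (vnorm_ge0 b); nra.
  replace (vnorm a * vnorm b * (vnorm a * vnorm b)) with
    ((vnorm a * vnorm a) * (vnorm b * vnorm b)) by ring.
  rewrite !vnorm_sq, <- lagrange. nra.
Qed.

Lemma vnorm_tri a b : vnorm (vadd a b) <= vnorm a + vnorm b.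
Proof.
  apply le_of_sq. pose proof (vnorm_ge0 a); pose proof (vnorm_ge0 b); nra.
  rewrite vnorm_sq.
  replace ((vnorm a + vnorm b) * (vnorm a + vnorm b)) with
    (vnorm a * vnorm a + vnorm b * vnorm b + 2 * (vnorm a * vnorm b)) by ring.
  rewrite !vnorm_sq. pose proof (cs a b). pose proof (Rle_abs (vdot a b)).
  replace (vdot (vadd a b) (vadd a b)) with (vdot a a + vdot b b + 2 * vdot a b).
  lra. destruct a as [[a1 a2] a3]; destruct b as [[b1 b2] b3]; vunf; ring.
Qed.

Lemma vnorm_scale c a : vnorm (vscale c a) = Rabs c * vnorm a.
Proof.
  unfold vnorm. replace (vdot (vscale c a) (vscale c a)) with (Rsqr c * vdot a a).
  rewrite sqrt_mult_alt, sqrt_Rsqr_abs; auto. apply Rle_0_sqr.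
  destruct a as [[a1 a2] a3]; vunf; unfold Rsqr; ring.
Qed.

Lemma vnorm_zero a : vnorm a = 0 -> a = (0,0,0).
Proof.
  intro H. assert (vdot a a = 0) by (rewrite <- vnorm_sq, H; ring).
  destruct a as [[a1 a2] a3]; vunf.
  assert (a1 = 0) by nra. assert (a2 = 0) by nra. assert (a3 = 0) by nra. subst; auto.
Qed.

Lemma vdist_pos x y : x <> y -> 0 < vdist x y.
Proof.
  intro H. destruct (Rle_lt_or_eq_dec 0 (vdist x y) (vnorm_ge0 _)); auto.
  exfalso; apply H. symmetry in e. apply vnorm_zero in e.
  destruct x as [[x1 x2] x3]; destruct y as [[y1 y2] y3]; vunf.
  inversion e. f_equal; [f_equal|]; lra.
Qed.

Lemma vdist_sym x y : vdist x y = vdist y x.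
Proof.
  unfold vdist, vnorm. f_equal.
  destruct x as [[x1 x2] x3]; destruct y as [[y1 y2] y3]; vunf; ring.
Qed.

Lemma vdist_refl x : vdist x x = 0.
Proof.
  unfold vdist, vnorm.
  destruct x as [[x1 x2] x3]; vunf. replace ((x1 - x1) * (x1 - x1) + (x2 - x2) * (x2 - x2) + (x3 - x3) * (x3 - x3)) with 0 by ring. apply sqrt_0.
Qed.

Lemma vdist_tri x y z : vdist x z <= vdist x y + vdist y z.
Proof.
  unfold vdist. replace (vsub x z) with (vadd (vsub x y) (vsub y z)).
  apply vnorm_tri.
  destruct x as [[x1 x2] x3]; destruct y as [[y1 y2] y3]; destruct z as [[z1 z2] z3]; vunf.
  f_equal; [f_equal|]; ring.
Qed.

Lemma cross_tri a b c :
  vnorm (vcross a c) * vnorm b <= vnorm (vcross a b) * vnorm c + vnorm (vcross b c) * vnorm a.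
Proof.
  destruct (Req_dec (vnorm b) 0) as [Hb|Hb].
  { rewrite Hb. pose proof (vnorm_ge0 (vcross a b)); pose proof (vnorm_ge0 c);
    pose proof (vnorm_ge0 (vcross b c)); pose proof (vnorm_ge0 a); nra. }
  assert (Hbp : 0 < vnorm b) by (pose proof (vnorm_ge0 b); lra).
  assert (E : vscale (vdot b b) (vcross a c) =
              vadd (vscale (vdot b c) (vcross a b)) (vcross a (vcross b (vcross c b)))).
  { destruct a as [[a1 a2] a3]; destruct b as [[b1 b2] b3]; destruct c as [[c1 c2] c3]; vunf.
    f_equal; [f_equal|]; ring. }
  assert (Hc : vnorm (vcross b c) = vnorm (vcross c b)).
  { unfold vnorm; f_equal. destruct b as [[b1 b2] b3]; destruct c as [[c1 c2] c3]; vunf; ring. }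
  apply Rmult_le_reg_l with (vnorm b); auto.
  pose proof (vnorm_ge0 (vcross a b)); pose proof (vnorm_ge0 c);
  pose proof (vnorm_ge0 (vcross b c)); pose proof (vnorm_ge0 a).
  assert (Q2: vnorm (vcross a (vcross b (vcross c b))) <= vnorm a * vnorm b * vnorm (vcross b c)).
  { eapply Rle_trans. apply cross_le. rewrite Rmult_assoc. apply Rmult_le_compat_l. apply vnorm_ge0.
    rewrite Hc. apply cross_le. }
  assert (Q3 : vnorm b * vnorm b * vnorm (vcross a c) <=
     vnorm b * vnorm c * vnorm (vcross a b) + vnorm a * vnorm b * vnorm (vcross b c)).
  { rewrite vnorm_sq, <- (Rabs_pos_eq (vdot b b)) by apply vdot_ge0. rewrite <- vnorm_scale, E.
    eapply Rle_trans. apply vnorm_tri. apply Rplus_le_compat; auto.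
    rewrite vnorm_scale. apply Rmult_le_compat_r. apply vnorm_ge0. apply cs. }
  nra.
Qed.

Lemma cross_zero_l w : vnorm (vcross (0,0,0) w) = 0.
Proof. destruct w as [[w1 w2] w3]; unfold vnorm; vunf. 
  replace (_ + _ + _) with 0 by ring. apply sqrt_0. Qed.

Lemma vsub_self x : vsub x x = (0,0,0).
Proof. destruct x as [[x1 x2] x3]; vunf. f_equal; [f_equal|]; ring. Qed.

Lemma cross_self v : vnorm (vcross v v) = 0.
Proof. destruct v as [[w1 w2] w3]; unfold vnorm; vunf. 
  replace (_ + _ + _) with 0 by ring. apply sqrt_0. Qed.

Lemma cross_anti a b : vnorm (vcross a b) = vnorm (vcross b a).
Proof. unfold vnorm; f_equal. destruct a as [[a1 a2] a3]; destruct b as [[b1 b2] b3]; vunf; ring. Qed.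

Lemma HK n g tau : thickness n g = Finite tau ->
  forall x y z, on_link n g x -> on_link n g y -> on_link n g z ->
  vnorm (vcross (vsub x y) (vsub z y)) * (2 * tau) <= vdist x y * vdist z y * vdist x z.
Proof.
  intros Ht x y z Hx Hy Hz.
  assert (P : 0 <= vdist x y * vdist z y * vdist x z).
  { unfold vdist; pose proof (vnorm_ge0 (vsub x y)); pose proof (vnorm_ge0 (vsub z y));
    pose proof (vnorm_ge0 (vsub x z)). apply Rmult_le_pos; auto. apply Rmult_le_pos; auto. }
  destruct (classic (x = y)) as [E|Nxy].
  { subst. rewrite vsub_self, cross_zero_l. lra. }
  destruct (classic (z = y)) as [E|Nzy].
  { subst. rewrite vsub_self, cross_anti, cross_zero_l. lra. }
  destruct (classic (x = z)) as [E|Nxz].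
  { subst. rewrite cross_self. lra. }
  pose proof (Glb_Rbar_correct (fun r : R => exists x y z,
     on_link n g x /\ on_link n g y /\ on_link n g z /\
     x <> y /\ y <> z /\ x <> z /\ circumradius x y z = Finite r)) as [Hlb _].
  fold (thickness n g) in Hlb. rewrite Ht in Hlb.
  destruct (Req_dec (vnorm (vcross (vsub x y) (vsub z y))) 0) as [C0|C0].
  { rewrite C0. lra. }
  assert (Cp : 0 < vnorm (vcross (vsub x y) (vsub z y))) by (pose proof (vnorm_ge0 (vcross (vsub x y) (vsub z y))); lra).
  specialize (Hlb (vdist y x * vdist x z * vdist z y / (2 * vnorm (vcross (vsub x y) (vsub z y))))).
  simpl in Hlb.
  assert (tau <= vdist y x * vdist x z * vdist z y / (2 * vnorm (vcross (vsub x y) (vsub z y)))).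
  { apply Hlb. exists y, x, z. repeat split; auto.
    unfold circumradius. destruct Req_EM_T; [contradiction|]. reflexivity. }
  rewrite (vdist_sym y x) in H.
  apply Rmult_le_compat_r with (r := 2 * vnorm (vcross (vsub x y) (vsub z y))) in H; [|lra].
  unfold Rdiv in H. rewrite Rmult_assoc, Rinv_l in H by lra. nra.
Qed.

Lemma cross_scale a p b q : vcross (vscale a p) (vscale b q) = vscale (a * b) (vcross p q).
Proof. destruct p as [[p1 p2] p3]; destruct q as [[q1 q2] q3]; vunf; f_equal; [f_equal|]; ring. Qed.

Lemma secant_unit x y : x <> y -> vnorm (secant x y) = 1.
Proof.
  intro H. unfold secant. rewrite vnorm_scale. pose proof (vdist_pos x y H).
  rewrite Rabs_pos_eq by (left; apply Rinv_0_lt_compat; auto). unfold vdist in *. field. lra.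
Qed.

Lemma secant_cross x y x' y' : x <> y -> x' <> y' ->
  vnorm (vcross (secant x y) (secant x' y')) =
  vnorm (vcross (vsub x y) (vsub x' y')) / (vdist x y * vdist x' y').
Proof.
  intros H H'. pose proof (vdist_pos x y H); pose proof (vdist_pos x' y' H').
  unfold secant. rewrite cross_scale, vnorm_scale. rewrite Rabs_pos_eq.
  field; lra. rewrite <- Rinv_mult. left; apply Rinv_0_lt_compat; nra.
Qed.

Lemma rp2_cross u v : vnorm u = 1 -> vnorm v = 1 -> rp2_dist u v = vnorm (vcross u v).
Proof.
  intros Hu Hv. unfold rp2_dist. pose proof (cs u v) as C. rewrite Hu, Hv in C.
  rewrite sin_acos. 2: { apply Rabs_le_between; lra. }
  unfold vnorm at 1. f_equal. pose proof (lagrange u v).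
  rewrite <- (vnorm_sq u), <- (vnorm_sq v), Hu, Hv in H. unfold Rsqr. lra.
Qed.

Lemma step1 n g tau : thickness n g = Finite tau -> 0 < tau ->
  forall x y x', on_link n g x -> on_link n g y -> on_link n g x' -> x <> y -> x' <> y ->
  vnorm (vcross (secant x y) (secant x' y)) <= vdist x x' / (2 * tau).
Proof.
  intros Ht Hp x y x' Hx Hy Hx' N1 N2. rewrite secant_cross by auto.
  pose proof (HK n g tau Ht x y x' Hx Hy Hx'). pose proof (vdist_pos _ _ N1); pose proof (vdist_pos _ _ N2).
  apply Rmult_le_reg_r with (vdist x y * vdist x' y * (2 * tau)). { apply Rmult_lt_0_compat; [apply Rmult_lt_0_compat|]; lra. }
  unfold Rdiv. replace (vnorm (vcross (vsub x y) (vsub x' y)) * / (vdist x y * vdist x' y) *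
    (vdist x y * vdist x' y * (2 * tau))) with (vnorm (vcross (vsub x y) (vsub x' y)) * (2 * tau)) by (field; lra).
  replace (vdist x x' * / (2 * tau) * (vdist x y * vdist x' y * (2 * tau))) with
    (vdist x y * vdist x' y * vdist x x') by (field; lra). auto.
Qed.

Lemma step2 n g tau : thickness n g = Finite tau -> 0 < tau ->
  forall x y y', on_link n g x -> on_link n g y -> on_link n g y' -> x <> y -> x <> y' ->
  vnorm (vcross (secant x y) (secant x y')) <= vdist y y' / (2 * tau).
Proof.
  intros Ht Hp x y y' Hx Hy Hy' N1 N2. rewrite secant_cross by auto.
  pose proof (HK n g tau Ht y x y' Hy Hx Hy'). pose proof (vdist_pos _ _ N1); pose proof (vdist_pos _ _ N2).
  replace (vcross (vsub x y) (vsub x y')) with (vcross (vsub y x) (vsub y' x)) by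
   (destruct x as [[x1 x2] x3]; destruct y as [[y1 y2] y3]; destruct y' as [[z1 z2] z3]; vunf; f_equal; [f_equal|]; ring).
  rewrite (vdist_sym y x), (vdist_sym y' x) in H.
  apply Rmult_le_reg_r with (vdist x y * vdist x y' * (2 * tau)). { apply Rmult_lt_0_compat; [apply Rmult_lt_0_compat|]; lra. }
  unfold Rdiv. replace (vnorm (vcross (vsub y x) (vsub y' x)) * / (vdist x y * vdist x y') *
    (vdist x y * vdist x y' * (2 * tau))) with (vnorm (vcross (vsub y x) (vsub y' x)) * (2 * tau)) by (field; lra).
  replace (vdist y y' * / (2 * tau) * (vdist x y * vdist x y' * (2 * tau))) with
    (vdist x y * vdist x y' * vdist y y') by (field; lra). auto.
Qed.

Lemma secant_swap x y : x <> y -> vnorm (vcross (secant x y) (secant y x)) = 0.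
Proof.
  intro H. rewrite secant_cross by auto.
  replace (vsub y x) with (vscale (-1) (vsub x y)).
  replace (vcross (vsub x y) (vscale (-1) (vsub x y))) with (vscale (-1) (vcross (vsub x y) (vsub x y))).
  rewrite vnorm_scale, cross_self. unfold Rdiv; ring.
  destruct x as [[x1 x2] x3]; destruct y as [[y1 y2] y3]; vunf; f_equal; [f_equal|]; ring.
  destruct x as [[x1 x2] x3]; destruct y as [[y1 y2] y3]; vunf; f_equal; [f_equal|]; ring.
Qed.

Lemma unit_tri u v w : vnorm u = 1 -> vnorm v = 1 -> vnorm w = 1 ->
  vnorm (vcross u w) <= vnorm (vcross u v) + vnorm (vcross v w).
Proof. intros Hu Hv Hw. pose proof (cross_tri u v w). rewrite Hu, Hv, Hw in H. lra. Qed.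

Lemma lipschitz_chord n g tau : thickness n g = Finite tau -> 0 < tau ->
  forall x y x' y', on_link n g x -> on_link n g y -> on_link n g x' -> on_link n g y' ->
  x <> y -> x' <> y' ->
  rp2_dist (secant x y) (secant x' y') <= (vdist x x' + vdist y y') / (2 * tau).
Proof.
  intros Ht Hp x y x' y' Hx Hy Hx' Hy' N1 N2.
  rewrite rp2_cross by (apply secant_unit; auto).
  pose proof (vnorm_ge0 (vsub x x')); pose proof (vnorm_ge0 (vsub y y')).
  fold (vdist x x') (vdist y y') in *.
  assert (0 < 2 * tau) by lra.
  destruct (classic (x' = y)) as [E|N3].
  - destruct (classic (x = y')) as [E'|N4].
    + subst. rewrite secant_swap by auto. apply Rmult_le_pos; [lra|left; apply Rinv_0_lt_compat; lra].
    + eapply Rle_trans. apply (unit_tri _ (secant x y')); apply secant_unit; auto.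
      rewrite (Rplus_comm (vdist x x')).
      unfold Rdiv; rewrite Rmult_plus_distr_r; apply Rplus_le_compat.
      * apply (step2 n g tau); auto.
      * rewrite (vdist_sym x x'). rewrite (cross_anti (secant x y')).
        apply (step1 n g tau); auto.
  - eapply Rle_trans. apply (unit_tri _ (secant x' y)); apply secant_unit; auto.
    unfold Rdiv; rewrite Rmult_plus_distr_r; apply Rplus_le_compat.
    * apply (step1 n g tau); auto.
    * apply (step2 n g tau); auto.
Qed.

Lemma arclength_ge f a b : a <= b -> Rbar_le (Finite (vdist (f a) (f b))) (arclength f a b).
Proof.
  intro H. unfold arclength. destruct (Lub_Rbar_correct (polygon_length f a b)) as [Hub _].
  apply Hub. exists 1%nat, (fun j => if Nat.eqb j 0 then a else b). simpl.
  repeat split; auto. intros j Hj. destruct j; simpl; [lra| lia].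
  simpl. ring.
Qed.

Lemma Rbar_le_min c x y : Rbar_le c x -> Rbar_le c y -> Rbar_le c (Rbar_min x y).
Proof.
  intros. unfold Rbar_min. destruct x, y, c; simpl in *; auto.
  unfold Rmin; destruct Rle_dec; auto.
Qed.

Lemma arc_dist_ge f s t : (forall u, f (u + 1) = f u) -> Rabs (s - t) <= 1 ->
  Rbar_le (Finite (vdist (f s) (f t))) (arc_dist f s t).
Proof.
  intros Hper Hst. unfold arc_dist.
  assert (E : vdist (f s) (f t) = vdist (f (Rmin s t)) (f (Rmax s t))).
  { unfold Rmin, Rmax; destruct Rle_dec; auto. apply vdist_sym. }
  apply Rbar_le_min.
  - rewrite E. apply arclength_ge. unfold Rmin, Rmax; destruct Rle_dec; lra.
  - rewrite E, <- (Hper (Rmin s t)), vdist_sym. apply arclength_ge.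
    unfold Rmin, Rmax in *; destruct Rle_dec; apply Rabs_le_between in Hst; lra.
Qed.

Lemma rbar_combine r a b (A B : Rbar) k : 0 < k ->
  r <= k * (a + b) -> Rbar_le (Finite a) A -> Rbar_le (Finite b) B ->
  Rbar_le (Finite r) (Rbar_mult (Finite k) (Rbar_plus A B)).
Proof.
  intros Hk H HA HB.
  destruct A as [A| |]; destruct B as [B| |]; simpl in *; try tauto.
  - nra.
  - destruct Rle_dec; [|lra]. destruct Rle_lt_or_eq_dec; simpl; auto. lra.
  - destruct Rle_dec; [|lra]. destruct Rle_lt_or_eq_dec; simpl; auto. lra.
  - destruct Rle_dec; [|lra]. destruct Rle_lt_or_eq_dec; simpl; auto. lra.
Qed.

Lemma part1 n g tau : is_link n g -> thickness n g = Finite tau -> 0 < tau ->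
  (forall (i j : nat) (s s' t t' : R),
      (i < n)%nat -> (j < n)%nat ->
      0 <= s < 1 -> 0 <= s' < 1 -> 0 <= t < 1 -> 0 <= t' < 1 ->
      g i s <> g j t -> g i s' <> g j t' ->
      Rbar_le (Finite (rp2_dist (secant (g i s) (g j t)) (secant (g i s') (g j t'))))
              (Rbar_mult (Finite (/ (2 * tau)))
                         (Rbar_plus (arc_dist (g i) s s') (arc_dist (g j) t t')))).
Proof.
  intros [Hl _] Ht Hp i j s s' t t' Hi Hj Hs Hs' Htt Ht' N1 N2.
  apply rbar_combine with (vdist (g i s) (g i s')) (vdist (g j t) (g j t')).
  - apply Rinv_0_lt_compat; lra.
  - rewrite Rmult_comm. apply (lipschitz_chord n g tau); auto;
    [exists i, s | exists j, t | exists i, s' | exists j, t']; auto.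
  - apply arc_dist_ge. apply (Hl i Hi). apply Rabs_le_between; lra.
  - apply arc_dist_ge. apply (Hl j Hj). apply Rabs_le_between; lra.
Qed.

Section Curve.
Variable f : R -> point.
Variable tau : R.
Hypothesis tau_pos : 0 < tau.
Hypothesis fcont : forall t, continuity_pt (fun u => px (f u)) t /\
                continuity_pt (fun u => py (f u)) t /\
                continuity_pt (fun u => pz (f u)) t.
Hypothesis fper : forall t, f (t + 1) = f t.
Hypothesis finj : forall s t, 0 <= s < 1 -> 0 <= t < 1 -> f s = f t -> s = t.
Hypothesis fK : forall x y z : R,
  vnorm (vcross (vsub (f x) (f y)) (vsub (f z) (f y))) * (2 * tau) <=
  vdist (f x) (f y) * vdist (f z) (f y) * vdist (f x) (f z).

Lemma per_nat t n : f (t + INR n) = f t.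
Proof.
  induction n. simpl. rewrite Rplus_0_r; auto.
  rewrite S_INR, <- Rplus_assoc, fper; auto.
Qed.

Lemma per_int t k : f (t + IZR k) = f t.
Proof.
  destruct k as [|p|p]. simpl; rewrite Rplus_0_r; auto.
  rewrite <- positive_nat_Z, <- INR_IZR_INZ. apply per_nat.
  replace (IZR (Z.neg p)) with (- INR (Pos.to_nat p)).
  rewrite <- (per_nat (t + - INR (Pos.to_nat p)) (Pos.to_nat p)). f_equal; ring.
  rewrite INR_IZR_INZ, positive_nat_Z. rewrite <- Ropp_Ropp_IZR. reflexivity.
Qed.

Lemma floor_ex x : exists k, 0 <= x - IZR k < 1.
Proof.
  exists (Int_part x). pose proof (base_Int_part x). lra.
Qed.

Lemma inj_gen p q : p < q < p + 1 -> f p <> f q.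
Proof.
  intros H E. destruct (floor_ex p) as [k Hk].
  assert (E1 : f p = f (p - IZR k)) by (rewrite <- (per_int (p - IZR k) k); f_equal; ring).
  assert (E2 : f q = f (q - IZR k)) by (rewrite <- (per_int (q - IZR k) k); f_equal; ring).
  destruct (Rlt_le_dec (q - IZR k) 1).
  - assert (p - IZR k = q - IZR k) by (apply finj; try lra; congruence). lra.
  - assert (E3 : f (q - IZR k) = f (q - IZR k - 1)) by (rewrite <- (fper (q - IZR k - 1)); f_equal; ring).
    assert (p - IZR k = q - IZR k - 1) by (apply finj; try lra; congruence). lra.
Qed.

Lemma vnorm_le_sum v : vnorm v <= Rabs (px v) + Rabs (py v) + Rabs (pz v).
Proof.
  apply le_of_sq. pose proof (Rabs_pos (px v)); pose proof (Rabs_pos (py v)); pose proof (Rabs_pos (pz v)); lra.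
  rewrite vnorm_sq. destruct v as [[a b] c]. unfold vdot, px, py, pz; simpl.
  pose proof (Rabs_pos a); pose proof (Rabs_pos b); pose proof (Rabs_pos c).
  assert (a*a = Rabs a * Rabs a) by (rewrite <- Rabs_mult; rewrite Rabs_pos_eq; nra).
  assert (b*b = Rabs b * Rabs b) by (rewrite <- Rabs_mult; rewrite Rabs_pos_eq; nra).
  assert (c*c = Rabs c * Rabs c) by (rewrite <- Rabs_mult; rewrite Rabs_pos_eq; nra).
  nra.
Qed.

Lemma coord_le v : Rabs (px v) <= vnorm v /\ Rabs (py v) <= vnorm v /\ Rabs (pz v) <= vnorm v.
Proof.
  destruct v as [[a b] c]. unfold vnorm, vdot, px, py, pz; simpl.
  repeat split; rewrite <- sqrt_Rsqr_abs; apply sqrt_le_1_alt; unfold Rsqr; nra.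
Qed.

Lemma unif_cont eps : 0 < eps -> exists del, 0 < del /\
  forall x y, Rabs (x - y) < del -> vdist (f x) (f y) < eps.
Proof.
  intro He.
  assert (U : forall g : R -> R, (forall t, continuity_pt g t) -> (forall t, g (t + 1) = g t) ->
     exists d, 0 < d /\ forall x y, Rabs (x - y) < d -> Rabs (g x - g y) < eps / 3).
  { intros g Hg Hgp.
    assert (Hgi : forall t k, g (t + IZR k) = g t).
    { intros t k. destruct k as [|p|p]. simpl; rewrite Rplus_0_r; auto.
      - rewrite <- positive_nat_Z, <- INR_IZR_INZ. induction (Pos.to_nat p). simpl; rewrite Rplus_0_r; auto.
        rewrite S_INR, <- Rplus_assoc, Hgp; auto.
      - replace (IZR (Z.neg p)) with (- INR (Pos.to_nat p)).
        2:{ rewrite INR_IZR_INZ, positive_nat_Z. rewrite <- Ropp_Ropp_IZR. reflexivity. }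
        induction (Pos.to_nat p). simpl; f_equal; ring.
        rewrite <- IHn. rewrite S_INR. rewrite <- (Hgp (t + - (INR n + 1))). f_equal; ring. }
    assert (He3 : 0 < eps / 3) by lra.
    destruct (Heine g (fun c => -1 <= c <= 2) (compact_P3 (-1) 2) (fun x _ => Hg x) (mkposreal _ He3)) as [[d Hd] Hu].
    exists (Rmin d (1/2)). split. apply Rmin_glb_lt; lra.
    intros x y Hxy. destruct (floor_ex x) as [k Hk].
    replace (g x) with (g (x - IZR k)) by (rewrite <- (Hgi (x - IZR k) k); f_equal; ring).
    replace (g y) with (g (y - IZR k)) by (rewrite <- (Hgi (y - IZR k) k); f_equal; ring).
    pose proof (Rmin_l d (1/2)); pose proof (Rmin_r d (1/2)).
    apply Rabs_lt_between in Hxy.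
    apply (Hu (x - IZR k) (y - IZR k)); simpl; try lra. apply Rabs_lt_between; lra. }
  destruct (U (fun u => px (f u))) as [d1 [Hd1 H1]]. intro t; apply fcont. intro t; rewrite fper; auto.
  destruct (U (fun u => py (f u))) as [d2 [Hd2 H2]]. intro t; apply fcont. intro t; rewrite fper; auto.
  destruct (U (fun u => pz (f u))) as [d3 [Hd3 H3]]. intro t; apply fcont. intro t; rewrite fper; auto.
  exists (Rmin d1 (Rmin d2 d3)). split. repeat apply Rmin_glb_lt; auto.
  intros x y Hxy. pose proof (Rmin_l d1 (Rmin d2 d3)); pose proof (Rmin_r d1 (Rmin d2 d3));
  pose proof (Rmin_l d2 d3); pose proof (Rmin_r d2 d3).
  unfold vdist. eapply Rle_lt_trans. apply vnorm_le_sum.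
  specialize (H1 x y ltac:(lra)); specialize (H2 x y ltac:(lra)); specialize (H3 x y ltac:(lra)).
  unfold vsub, px, py, pz in *; simpl in *. lra.
Qed.


Lemma cont_dot P w : continuity (fun t => vdot (vsub (f t) P) w).
Proof.
  intro t. destruct (fcont t) as [h1 [h2 h3]]. unfold vdot, vsub, px, py, pz in *; simpl in *.
  assert (C : forall g : R -> R, continuity_pt g t -> forall a b : R, continuity_pt (fun u => (g u - a) * b) t).
  { intros g Hg a b. apply (continuity_pt_mult (fun u => g u - a) (fun _ => b)).
    apply (continuity_pt_minus g (fun _ => a)); auto. apply continuity_pt_const; intros ? ?; auto.
    apply continuity_pt_const; intros ? ?; auto. }
  apply (continuity_pt_plus (fun u => _ + _) (fun u => _)).
  apply (continuity_pt_plus (fun u => _) (fun u => _)).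
  apply (C (fun u => fst (fst (f u)))); auto.
  apply (C (fun u => snd (fst (f u)))); auto.
  apply (C (fun u => snd (f u))); auto.
Qed.


Definition DIAM a b eta := forall x, a <= x <= b -> vdist (f x) (f a) <= eta /\ vdist (f x) (f b) <= eta.

Lemma loc_cross a b eta p q : b < a + 1 -> DIAM a b eta -> a <= p -> p < q -> q <= b ->
  vnorm (vcross (vsub (f q) (f p)) (vsub (f b) (f a))) * tau <=
  eta * vdist (f q) (f p) * vdist (f b) (f a).
Proof.
  intros Hab HD Hp Hpq Hq.
  pose proof (fK q p b) as X. pose proof (fK p b a) as Y.
  assert (EC : vnorm (vcross (vsub (f b) (f p)) (vsub (f b) (f a))) =
               vnorm (vcross (vsub (f p) (f b)) (vsub (f a) (f b)))).
  { unfold vnorm; f_equal. destruct (f a) as [[a1 a2] a3]; destruct (f b) as [[b1 b2] b3];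
    destruct (f p) as [[p1 p2] p3]; vunf; ring. }
  pose proof (cross_tri (vsub (f q) (f p)) (vsub (f b) (f p)) (vsub (f b) (f a))) as T.
  rewrite EC in T.
  fold (vdist (f q) (f p)) (vdist (f b) (f p)) (vdist (f b) (f a)) in T.
  destruct (HD q ltac:(lra)) as [_ Dq]. destruct (HD p ltac:(lra)) as [Dp _].
  rewrite (vdist_sym (f p) (f b)), (vdist_sym (f a) (f b)) in Y.
  assert (Cpos : 0 < vdist (f b) (f p)).
  { apply vdist_pos. intro E. apply (inj_gen p b); auto. lra. }
  set (nA := vdist (f q) (f p)) in *. set (nB := vdist (f b) (f a)) in *. set (nC := vdist (f b) (f p)) in *.
  set (x1 := vnorm (vcross (vsub (f q) (f p)) (vsub (f b) (f a)))) in *.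
  set (x2 := vnorm (vcross (vsub (f q) (f p)) (vsub (f b) (f p)))) in *.
  set (x3 := vnorm (vcross (vsub (f p) (f b)) (vsub (f a) (f b)))) in *.
  assert (0 <= nA) by apply vnorm_ge0. assert (0 <= nB) by apply vnorm_ge0.
  assert (0 <= x1) by apply vnorm_ge0. 
  assert (Z1 : x2 * (2 * tau) <= nA * nC * eta).
  { eapply Rle_trans. apply X. apply Rmult_le_compat_l. apply Rmult_le_pos; auto; lra. auto. }
  assert (Z2 : x3 * (2 * tau) <= nC * nB * eta).
  { eapply Rle_trans. apply Y. apply Rmult_le_compat_l. apply Rmult_le_pos; auto; lra. auto. }
  assert (Z3 : x1 * nC * (2 * tau) <= 2 * eta * nA * nB * nC).
  { apply Rle_trans with ((x2 * nB + x3 * nA) * (2 * tau)). apply Rmult_le_compat_r; lra.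
    replace ((x2 * nB + x3 * nA) * (2 * tau)) with ((x2 * (2*tau)) * nB + (x3 * (2 * tau)) * nA) by ring.
    apply Rle_trans with (nA * nC * eta * nB + nC * nB * eta * nA).
    apply Rplus_le_compat; apply Rmult_le_compat_r; auto. right; ring. }
  apply Rmult_le_reg_r with (2 * nC). lra.
  replace (x1 * tau * (2 * nC)) with (x1 * nC * (2 * tau)) by ring.
  replace (eta * nA * nB * (2 * nC)) with (2 * eta * nA * nB * nC) by ring. auto.
Qed.

Lemma loc_sq a b eta p q : b < a + 1 -> DIAM a b eta -> a <= p -> p < q -> q <= b ->
  (1 - (eta / tau) * (eta / tau)) * (vdist (f q) (f p) * vdist (f b) (f a)) * (vdist (f q) (f p) * vdist (f b) (f a))
  <= vdot (vsub (f q) (f p)) (vsub (f b) (f a)) * vdot (vsub (f q) (f p)) (vsub (f b) (f a)).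
Proof.
  intros Hab HD Hp Hpq Hq. pose proof (loc_cross a b eta p q Hab HD Hp Hpq Hq) as L.
  pose proof (lagrange (vsub (f q) (f p)) (vsub (f b) (f a))) as G.
  rewrite <- !vnorm_sq in G. fold (vdist (f q) (f p)) (vdist (f b) (f a)) in *.
  set (nA := vdist (f q) (f p)) in *. set (nB := vdist (f b) (f a)) in *.
  set (x1 := vnorm (vcross (vsub (f q) (f p)) (vsub (f b) (f a)))) in *.
  set (d := vdot (vsub (f q) (f p)) (vsub (f b) (f a))) in *.
  assert (0 <= x1) by apply vnorm_ge0. assert (0 <= nA) by apply vnorm_ge0. assert (0 <= nB) by apply vnorm_ge0.
  assert (x1 <= eta / tau * nA * nB).
  { apply Rmult_le_reg_r with tau; auto. unfold Rdiv. 
    replace (eta * / tau * nA * nB * tau) with (eta * nA * nB) by (field; lra). auto. }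
  assert (x1 * x1 <= (eta / tau * nA * nB) * (eta / tau * nA * nB)) by (apply Rmult_le_compat; auto).
  replace ((1 - eta / tau * (eta / tau)) * (nA * nB) * (nA * nB)) with
    (nA * nA * (nB * nB) - (eta / tau * nA * nB) * (eta / tau * nA * nB)) by ring.
  lra.
Qed.


Lemma dot_sub_swap x y w : vdot (vsub x y) w = - vdot (vsub y x) w.
Proof. destruct x as [[x1 x2] x3]; destruct y as [[y1 y2] y3]; destruct w as [[w1 w2] w3]; vunf; ring. Qed.

Lemma vdot_self_dist x y : vdot (vsub x y) (vsub x y) = vdist x y * vdist x y.
Proof. unfold vdist; rewrite vnorm_sq; auto. Qed.

Lemma dpos p q : p < q -> q < p + 1 -> 0 < vdist (f q) (f p).
Proof. intros. apply vdist_pos. intro E. apply (inj_gen p q); [lra|auto]. Qed.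

Lemma loc_main a b eta : b < a + 1 -> DIAM a b eta -> eta < tau ->
  forall p q, a <= p -> p <= q -> q <= b ->
  (1 - (eta / tau) * (eta / tau)) * vdist (f q) (f p) * vdist (f b) (f a) <=
  vdot (vsub (f q) (f p)) (vsub (f b) (f a)).
Proof.
  intros Hab HD Het p q Hp Hpq Hq.
  assert (He0 : 0 <= eta) by (destruct (HD a ltac:(lra)) as [H _]; eapply Rle_trans; [apply vnorm_ge0|apply H]).
  assert (S0 : 0 <= eta / tau * (eta / tau)) by (apply Rmult_le_pos; unfold Rdiv; apply Rmult_le_pos; try lra; left; apply Rinv_0_lt_compat; lra).
  assert (S1 : eta / tau * (eta / tau) < 1).
  { assert (eta / tau < 1) by (apply Rmult_lt_reg_r with tau; auto; unfold Rdiv; rewrite Rmult_assoc, Rinv_l; lra).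
    assert (0 <= eta / tau) by (unfold Rdiv; apply Rmult_le_pos; try lra; left; apply Rinv_0_lt_compat; lra). nra. }
  set (s2 := eta / tau * (eta / tau)) in *.
  set (B := vsub (f b) (f a)).
  assert (NZ : forall p q, a <= p -> p < q -> q <= b -> vdot (vsub (f q) (f p)) B <> 0).
  { intros p' q' H1 H2 H3 E. pose proof (loc_sq a b eta p' q' Hab HD H1 H2 H3) as L. fold s2 B in L.
    rewrite E in L. assert (0 < vdist (f q') (f p')) by (apply dpos; lra).
    assert (0 < vdist (f b) (f a)) by (apply dpos; lra).
    assert (P0 : 0 < vdist (f q') (f p') * vdist (f b) (f a)) by (apply Rmult_lt_0_compat; auto).
    set (P := vdist (f q') (f p') * vdist (f b) (f a)) in *.
    assert (0 < (1 - s2) * P * P) by (apply Rmult_lt_0_compat; [apply Rmult_lt_0_compat|]; lra). lra. }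
  destruct (Rle_lt_or_eq_dec p q Hpq) as [Hlt|Heq].
  2:{ subst q. rewrite vsub_self, vdist_refl. unfold vdot, px, py, pz; simpl. lra. }
  assert (G0 : forall x, a < x <= b -> 0 < vdot (vsub (f x) (f a)) B).
  { intros x Hx. destruct (Rtotal_order (vdot (vsub (f x) (f a)) B) 0) as [Hn|[Hz|Hpz]]; auto.
    - exfalso.
      assert (Gb : 0 < vdot (vsub (f b) (f a)) B).
      { unfold B; rewrite vdot_self_dist. assert (0 < vdist (f b) (f a)) by (apply dpos; lra). nra. }
      assert (x < b) by (destruct (Req_dec x b); [subst; lra|lra]).
      destruct (IVT _ x b (cont_dot (f a) B) H Hn Gb) as [z [Hz1 Hz2]].
      apply (NZ a z); auto; lra.
    - exfalso; apply (NZ a x); auto; lra. }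
  assert (Gq := G0 q ltac:(lra)).
  destruct (Rtotal_order (vdot (vsub (f q) (f p)) B) 0) as [Hn|[Hz|Hpz]].
  - exfalso.
    destruct (Req_dec p a) as [Epa|Npa]. subst p; lra.
    assert (K1 : vdot (vsub (f a) (f q)) B < 0) by (rewrite dot_sub_swap; lra).
    assert (K2 : 0 < vdot (vsub (f p) (f q)) B) by (rewrite dot_sub_swap; lra).
    destruct (IVT _ a p (cont_dot (f q) B) ltac:(lra) K1 K2) as [z [Hz1 Hz2]].
    apply (NZ z q); try lra. rewrite dot_sub_swap, Hz2; ring.
  - exfalso; apply (NZ p q); auto.
  - pose proof (loc_sq a b eta p q Hab HD Hp Hlt Hq) as L. fold s2 B in L.
    pose proof (cs (vsub (f q) (f p)) B) as C. fold (vdist (f q) (f p)) in C. unfold B in *. fold (vdist (f b) (f a)) in *.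
    rewrite Rabs_pos_eq in C by lra.
    set (P := vdist (f q) (f p) * vdist (f b) (f a)) in *.
    set (d := vdot (vsub (f q) (f p)) (vsub (f b) (f a))) in *.
    replace ((1 - s2) * vdist (f q) (f p) * vdist (f b) (f a)) with ((1 - s2) * P) by (unfold P; ring).
    assert (0 < P) by lra.
    assert (d * P >= (1 - s2) * P * P) by nra.
    nra.
Qed.


Fixpoint chain (a : R) (l : list R) (b : R) : Prop :=
  match l with nil => a = b | x :: l' => a <= x /\ chain x l' b end.
Fixpoint plen (a : R) (l : list R) : R :=
  match l with nil => 0 | x :: l' => vdist (f x) (f a) + plen x l' end.

Lemma chain_le a l b : chain a l b -> a <= b.
Proof. revert a; induction l; simpl; intros. lra. destruct H. specialize (IHl _ H0). lra. Qed.

Lemma plen_ge0 a l : 0 <= plen a l.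
Proof. revert a; induction l; simpl; intros. lra. pose proof (vnorm_ge0 (vsub (f a) (f a0))). specialize (IHl a). unfold vdist; lra. Qed.

Lemma chain_app a l1 b l2 c : chain a l1 b -> chain b l2 c ->
  chain a (l1 ++ l2) c /\ plen a (l1 ++ l2) = plen a l1 + plen b l2.
Proof.
  revert a; induction l1; simpl; intros a0 H1 H2.
  - subst. split; auto. ring.
  - destruct H1 as [H1 H3]. destruct (IHl1 a H3 H2) as [C E]. split; auto. rewrite E; ring.
Qed.

Lemma chain_split a l c b : chain a l c -> a <= b -> b <= c ->
  exists l1 l2, chain a l1 b /\ chain b l2 c /\ plen a l <= plen a l1 + plen b l2.
Proof.
  revert a; induction l; simpl; intros a0 H Hab Hbc.
  - subst. assert (b = c) by lra. subst. exists nil, nil. simpl. repeat split; lra.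
  - destruct H as [H1 H2]. destruct (Rle_dec a b) as [Hxb|Hxb].
    + destruct (IHl a H2 Hxb Hbc) as [l1 [l2 [C1 [C2 E]]]].
      exists (a :: l1), l2. simpl. repeat split; auto. lra.
    + exists (b :: nil), (a :: l). simpl. repeat split; auto; try lra.
      pose proof (vdist_tri (f a) (f b) (f a0)). lra.
Qed.

Lemma chain_refl0 a l : chain a l a -> plen a l = 0.
Proof.
  revert a; induction l; simpl; intros a0 H. auto.
  destruct H as [H1 H2]. pose proof (chain_le _ _ _ H2). assert (a = a0) by lra. subst.
  rewrite vdist_refl, IHl; auto. ring.
Qed.

Lemma poly_bound a b eta : b < a + 1 -> DIAM a b eta -> eta < tau ->
  forall l, chain a l b -> (1 - (eta / tau) * (eta / tau)) * plen a l <= vdist (f b) (f a).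
Proof.
  intros Hab HD Het.
  assert (G : forall l p, a <= p -> chain p l b ->
    (1 - (eta / tau) * (eta / tau)) * plen p l * vdist (f b) (f a) <= vdot (vsub (f b) (f p)) (vsub (f b) (f a))).
  { induction l; simpl; intros p Hp H.
    - subst. rewrite vsub_self. unfold vdot, px, py, pz; simpl. lra.
    - destruct H as [H1 H2]. pose proof (chain_le _ _ _ H2).
      pose proof (loc_main a b eta Hab HD Het p a0 Hp H1 H).
      specialize (IHl a0 ltac:(lra) H2).
      replace (vdot (vsub (f b) (f p)) (vsub (f b) (f a))) with
        (vdot (vsub (f a0) (f p)) (vsub (f b) (f a)) + vdot (vsub (f b) (f a0)) (vsub (f b) (f a))).
      lra. destruct (f a0) as [[x1 x2] x3]; destruct (f b) as [[y1 y2] y3]; destruct (f p) as [[z1 z2] z3];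
      destruct (f a) as [[w1 w2] w3]; vunf; ring. }
  intros l H. pose proof (chain_le _ _ _ H).
  destruct (Rle_lt_or_eq_dec a b H0) as [Hlt|Heq].
  - specialize (G l a (Rle_refl a) H). rewrite vdot_self_dist in G.
    assert (0 < vdist (f b) (f a)) by (apply dpos; lra). nra.
  - subst. rewrite chain_refl0; auto. rewrite vdist_refl. lra.
Qed.

Definition PL a b := fun v => exists l, chain a l b /\ v = plen a l.
Definition Len a b := real (Lub_Rbar (PL a b)).
Definition Bnd a b := exists M, forall l, chain a l b -> plen a l <= M.

Lemma Len_spec a b : a <= b -> Bnd a b ->
  (forall l, chain a l b -> plen a l <= Len a b) /\
  (forall M, (forall l, chain a l b -> plen a l <= M) -> Len a b <= M).
Proof.
  intros Hab [M HM]. destruct (Lub_Rbar_correct (PL a b)) as [Hub Hl].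
  unfold Len. destruct (Lub_Rbar (PL a b)) as [L| |] eqn:EL.
  - simpl. split.
    + intros l Hc. apply (Hub (plen a l)). exists l; auto.
    + intros M' HM'. apply (Hl (Finite M')). intros v [l [Hc ->]]. simpl. auto.
  - exfalso. specialize (Hl (Finite M)). simpl in Hl. apply Hl. intros v [l [Hc ->]]. simpl; auto.
  - exfalso. specialize (Hub (plen a (b :: nil))). simpl in Hub. apply Hub. exists (b :: nil). simpl. repeat split; auto.
Qed.


Lemma short_ex : exists d0, 0 < d0 /\ d0 <= 1/2 /\
  forall x y, Rabs (x - y) < d0 -> vdist (f x) (f y) < tau / 2.
Proof.
  destruct (unif_cont (tau/2) ltac:(lra)) as [d [Hd H]].
  exists (Rmin d (1/2)). split. apply Rmin_glb_lt; lra. split. apply Rmin_r.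
  intros x y Hxy. apply H. pose proof (Rmin_l d (1/2)). lra.
Qed.

Definition d0 := proj1_sig (constructive_indefinite_description _ short_ex).
Lemma d0_spec : 0 < d0 /\ d0 <= 1/2 /\
  forall x y, Rabs (x - y) < d0 -> vdist (f x) (f y) < tau / 2.
Proof. unfold d0; destruct constructive_indefinite_description; auto. Qed.

Lemma short_diam a b : a <= b -> b - a < d0 -> DIAM a b (tau / 2).
Proof.
  intros H1 H2 x Hx. destruct d0_spec as [_ [_ H]]. split; left; apply H; apply Rabs_lt_between; lra.
Qed.

Lemma short_plen a b l : a <= b -> b - a < d0 -> chain a l b -> plen a l <= 4/3 * vdist (f b) (f a).
Proof.
  intros H1 H2 Hc. destruct d0_spec as [Hd [Hd2 _]].
  pose proof (poly_bound a b (tau/2) ltac:(lra) (short_diam a b H1 H2) ltac:(lra) l Hc).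
  replace (tau / 2 / tau) with (1/2) in H by (field; lra). lra.
Qed.

Lemma Bnd_short a b : a <= b -> b - a < d0 -> Bnd a b.
Proof. intros. exists (4/3 * vdist (f b) (f a)). intros; apply short_plen; auto. Qed.

Lemma Bnd_add a b c : a <= b -> b <= c -> Bnd a b -> Bnd b c -> Bnd a c.
Proof.
  intros H1 H2 [M1 B1] [M2 B2]. exists (M1 + M2). intros l Hc.
  destruct (chain_split a l c b Hc H1 H2) as [l1 [l2 [C1 [C2 E]]]].
  specialize (B1 l1 C1); specialize (B2 l2 C2). lra.
Qed.

Lemma Bnd_sub a b c : a <= b -> b <= c -> Bnd a c -> Bnd a b /\ Bnd b c.
Proof.
  intros H1 H2 [M B]. split.
  - exists M. intros l Hc. destruct (chain_app a l b (c :: nil) c Hc) as [C E]. simpl; auto.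
    specialize (B _ C). rewrite E in B. simpl in B. pose proof (vnorm_ge0 (vsub (f c) (f b))). unfold vdist in *. lra.
  - exists M. intros l Hc. specialize (B (b :: l) (conj H1 Hc)). simpl in B.
    pose proof (vnorm_ge0 (vsub (f b) (f a))). unfold vdist in *. lra.
Qed.

Lemma Bnd_all a b : a <= b -> Bnd a b.
Proof.
  destruct d0_spec as [Hd _].
  assert (G : forall n a b, a <= b -> b - a <= INR n * (d0 / 2) -> Bnd a b).
  { induction n; intros a0 b0 H1 H2.
    - simpl in H2. apply Bnd_short; lra.
    - rewrite S_INR in H2. destruct (Rle_dec (b0 - a0) (d0/2)).
      + apply Bnd_short; lra.
      + apply Bnd_add with (a0 + d0/2); try lra. apply Bnd_short; lra. apply IHn; lra. }
  intro H. destruct (archimed ((b - a) / (d0 / 2))) as [A1 A2].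
  apply (G (Z.to_nat (up ((b - a) / (d0 / 2))))); auto.
  rewrite INR_IZR_INZ, Z2Nat.id.
  - apply Rmult_le_reg_r with (/ (d0/2)). apply Rinv_0_lt_compat; lra.
    rewrite Rmult_assoc, Rinv_r by lra. rewrite Rmult_1_r. unfold Rdiv in A1. lra.
  - apply le_IZR. assert (0 <= (b - a) / (d0 / 2)) by (apply Rdiv_le_0_compat; lra). lra.
Qed.

Lemma Len_ub a b l : chain a l b -> plen a l <= Len a b.
Proof. intro H. pose proof (chain_le _ _ _ H). apply (Len_spec a b H0 (Bnd_all a b H0)); auto. Qed.

Lemma Len_lub a b M : a <= b -> (forall l, chain a l b -> plen a l <= M) -> Len a b <= M.
Proof. intros H. apply (Len_spec a b H (Bnd_all a b H)). Qed.

Lemma Len_chord a b : a <= b -> vdist (f b) (f a) <= Len a b.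
Proof. intro H. replace (vdist (f b) (f a)) with (plen a (b :: nil)) by (simpl; ring). apply Len_ub. simpl; auto. Qed.

Lemma Len_ge0 a b : a <= b -> 0 <= Len a b.
Proof. intro H. eapply Rle_trans; [apply vnorm_ge0 | apply Len_chord; auto]. Qed.

Lemma Len_refl a : Len a a = 0.
Proof.
  apply Rle_antisym. apply Len_lub. lra. intros l H. rewrite chain_refl0; auto. lra.
  apply Len_ge0; lra.
Qed.

Lemma Len_add a b c : a <= b -> b <= c -> Len a c = Len a b + Len b c.
Proof.
  intros H1 H2. apply Rle_antisym.
  - apply Len_lub. lra. intros l Hc. destruct (chain_split a l c b Hc H1 H2) as [l1 [l2 [C1 [C2 E]]]].
    pose proof (Len_ub _ _ _ C1); pose proof (Len_ub _ _ _ C2). lra.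
  - assert (forall l1 l2, chain a l1 b -> chain b l2 c -> plen a l1 + plen b l2 <= Len a c).
    { intros l1 l2 C1 C2. destruct (chain_app a l1 b l2 c C1 C2) as [C E]. rewrite <- E. apply Len_ub; auto. }
    assert (forall l2, chain b l2 c -> Len a b <= Len a c - plen b l2).
    { intros l2 C2. apply Len_lub; auto. intros l1 C1. specialize (H l1 l2 C1 C2). lra. }
    assert (Len b c <= Len a c - Len a b).
    { apply Len_lub; auto. intros l2 C2. specialize (H0 l2 C2). lra. }
    lra.
Qed.

Lemma Len_mono a b c : a <= b -> b <= c -> Len a b <= Len a c /\ Len b c <= Len a c.
Proof. intros. rewrite (Len_add a b c) by auto. pose proof (Len_ge0 a b H); pose proof (Len_ge0 b c H0). lra. Qed.

Lemma Len_diam a b : a <= b -> DIAM a b (Len a b).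
Proof.
  intros H x Hx. split.
  - eapply Rle_trans. apply Len_chord; lra. apply (Len_mono a x b); lra.
  - rewrite vdist_sym. eapply Rle_trans. apply Len_chord; lra. apply (Len_mono a x b); lra.
Qed.

Lemma Len_short a b : a <= b -> b - a < d0 -> Len a b <= 4/3 * vdist (f b) (f a).
Proof. intros. apply Len_lub; auto. intros; apply short_plen; auto. Qed.

Lemma Len_lower a b : a <= b -> b < a + 1 -> Len a b < tau ->
  (1 - (Len a b / tau) * (Len a b / tau)) * Len a b <= vdist (f b) (f a).
Proof.
  intros H1 H2 H3.
  assert (S : 0 < 1 - (Len a b / tau) * (Len a b / tau)).
  { pose proof (Len_ge0 a b H1). assert (Len a b / tau < 1) by (apply Rmult_lt_reg_r with tau; auto; unfold Rdiv; rewrite Rmult_assoc, Rinv_l; lra).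
    assert (0 <= Len a b / tau) by (unfold Rdiv; apply Rmult_le_pos; try lra; left; apply Rinv_0_lt_compat; lra). nra. }
  apply Rmult_le_reg_l with (/ (1 - Len a b / tau * (Len a b / tau))). apply Rinv_0_lt_compat; auto.
  rewrite <- Rmult_assoc, Rinv_l, Rmult_1_l by lra.
  apply Len_lub; auto. intros l Hc. pose proof (poly_bound a b (Len a b) H2 (Len_diam a b H1) H3 l Hc).
  apply Rmult_le_reg_l with (1 - Len a b / tau * (Len a b / tau)); auto.
  rewrite <- Rmult_assoc, Rinv_r, Rmult_1_l by lra. auto.
Qed.


Lemma chain_shift a l b c : chain a l b -> chain (a + c) (map (fun x => x + c) l) (b + c).
Proof. revert a; induction l; simpl; intros a0 H. subst; auto. destruct H. split. lra. auto. Qed.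

Lemma plen_shift a l k : plen (a + IZR k) (map (fun x => x + IZR k) l) = plen a l.
Proof. revert a; induction l; simpl; intros; auto. rewrite IHl, !per_int. auto. Qed.

Lemma Len_shift_le a b k : a <= b -> Len (a + IZR k) (b + IZR k) <= Len a b.
Proof.
  intro H. apply Len_lub. lra. intros l Hc.
  pose proof (chain_shift _ _ _ (IZR (- k)) Hc) as C. rewrite opp_IZR in C.
  replace (a + IZR k + - IZR k) with a in C by ring. replace (b + IZR k + - IZR k) with b in C by ring.
  pose proof (Len_ub _ _ _ C).
  replace (plen a (map (fun x => x + - IZR k) l)) with (plen (a + IZR k) l) in H0. auto.
  rewrite <- (plen_shift a (map (fun x => x + - IZR k) l) k). rewrite map_map.
  rewrite map_ext with (g := fun x => x). rewrite map_id; auto. intro; ring.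
Qed.

Lemma Len_shift a b k : a <= b -> Len (a + IZR k) (b + IZR k) = Len a b.
Proof.
  intro H. apply Rle_antisym. apply Len_shift_le; auto.
  pose proof (Len_shift_le (a + IZR k) (b + IZR k) (- k) ltac:(lra)). rewrite opp_IZR in H0.
  replace (a + IZR k + - IZR k) with a in H0 by ring. replace (b + IZR k + - IZR k) with b in H0 by ring. auto.
Qed.

Definition Lam := Len 0 1.

Lemma Len_period a : Len a (a + 1) = Lam.
Proof.
  destruct (floor_ex a) as [k Hk]. set (a' := a - IZR k).
  replace a with (a' + IZR k) by (unfold a'; ring).
  replace (a' + IZR k + 1) with ((a' + 1) + IZR k) by ring.
  rewrite Len_shift by lra. rewrite (Len_add a' 1 (a' + 1)) by (unfold a'; lra).
  replace (Len 1 (a' + 1)) with (Len (0 + IZR 1) (a' + IZR 1)) by (f_equal; simpl; ring).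
  rewrite Len_shift by (unfold a'; lra). unfold Lam. rewrite Rplus_comm, <- Len_add; unfold a'; auto; lra.
Qed.

Lemma Len_pos a b : a < b -> 0 < Len a b.
Proof.
  intro H. set (m := Rmin b (a + 1/2)).
  assert (a < m) by (unfold m; apply Rmin_glb_lt; lra). assert (m <= b) by (unfold m; apply Rmin_l).
  assert (m < a + 1) by (unfold m; pose proof (Rmin_r b (a + 1/2)); lra).
  pose proof (dpos a m H0 H2). pose proof (Len_chord a m ltac:(lra)). pose proof (Len_mono a m b ltac:(lra) H1). lra.
Qed.

Lemma Lam_pos : 0 < Lam.
Proof. apply Len_pos; lra. Qed.

Definition sig_ a := if Rle_dec 0 a then Len 0 a else - Len a 0.

Lemma sig_diff a b : a <= b -> sig_ b - sig_ a = Len a b.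
Proof.
  intro H. unfold sig_. destruct (Rle_dec 0 a); destruct (Rle_dec 0 b).
  - rewrite (Len_add 0 a b) by lra. ring.
  - lra.
  - rewrite (Len_add a 0 b) by lra. ring.
  - rewrite (Len_add a b 0) by lra. ring.
Qed.

Lemma sig_0 : sig_ 0 = 0.
Proof. unfold sig_. destruct Rle_dec. apply Len_refl. lra. Qed.

Lemma sig_lt a b : a < b -> sig_ a < sig_ b.
Proof. intro H. pose proof (sig_diff a b ltac:(lra)). pose proof (Len_pos a b H). lra. Qed.

Lemma sig_le a b : a <= b -> sig_ a <= sig_ b.
Proof. intro H. destruct (Rle_lt_or_eq_dec a b H). left; apply sig_lt; auto. subst; lra. Qed.

Lemma sig_per a : sig_ (a + 1) = sig_ a + Lam.
Proof. pose proof (sig_diff a (a+1) ltac:(lra)). rewrite Len_period in H. lra. Qed.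

Lemma sig_per_nat a n : sig_ (a + INR n) = sig_ a + INR n * Lam.
Proof.
  induction n. simpl. rewrite Rplus_0_r; ring.
  rewrite S_INR. replace (a + (INR n + 1)) with ((a + INR n) + 1) by ring. rewrite sig_per, IHn. ring.
Qed.

Lemma sig_per_int a k : sig_ (a + IZR k) = sig_ a + IZR k * Lam.
Proof.
  destruct k as [|p|p]. simpl. rewrite Rplus_0_r; ring.
  rewrite <- positive_nat_Z, <- INR_IZR_INZ. apply sig_per_nat.
  replace (IZR (Z.neg p)) with (- INR (Pos.to_nat p)).
  2:{ rewrite INR_IZR_INZ, positive_nat_Z. rewrite <- Ropp_Ropp_IZR. reflexivity. }
  pose proof (sig_per_nat (a + - INR (Pos.to_nat p)) (Pos.to_nat p)).
  replace (a + - INR (Pos.to_nat p) + INR (Pos.to_nat p)) with a in H by ring. lra.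
Qed.

Lemma sig_cont_bound a b : a <= b -> b - a < d0 -> sig_ b - sig_ a <= 4/3 * vdist (f b) (f a).
Proof. intros. rewrite sig_diff by auto. apply Len_short; auto. Qed.

Lemma sig_cont : continuity sig_.
Proof.
  intro x. unfold continuity_pt, continue_in, limit1_in, limit_in. simpl. unfold R_dist.
  intros eps He. destruct d0_spec as [Hd [_ _]].
  destruct (unif_cont (3/4 * eps) ltac:(lra)) as [del [Hdel U]].
  exists (Rmin del d0). split. apply Rmin_glb_lt; auto.
  intros y [_ Hy]. pose proof (Rmin_l del d0); pose proof (Rmin_r del d0).
  apply Rabs_lt_between in Hy.
  destruct (Rle_dec x y).
  - pose proof (sig_cont_bound x y r ltac:(lra)). pose proof (sig_le x y r).
    specialize (U y x ltac:(apply Rabs_lt_between; lra)). rewrite Rabs_pos_eq by lra. lra.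
  - pose proof (sig_cont_bound y x ltac:(lra) ltac:(lra)). pose proof (sig_le y x ltac:(lra)).
    specialize (U x y ltac:(apply Rabs_lt_between; lra)). rewrite Rabs_left1 by lra. lra.
Qed.

Lemma sig_onto v : exists a, sig_ a = v.
Proof.
  pose proof Lam_pos.
  destruct (floor_ex (v / Lam)) as [k Hk].
  set (w := v - IZR k * Lam).
  assert (Hw : 0 <= w < Lam).
  { unfold w. split.
    - apply Rmult_le_reg_r with (/Lam). apply Rinv_0_lt_compat; auto.
      rewrite Rmult_0_l. replace ((v - IZR k * Lam) * / Lam) with (v / Lam - IZR k) by (field; lra). lra.
    - apply Rmult_lt_reg_r with (/Lam). apply Rinv_0_lt_compat; auto.
      replace ((v - IZR k * Lam) * / Lam) with (v / Lam - IZR k) by (field; lra). rewrite Rinv_r; lra. }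
  assert (C : continuity (fun a => sig_ a - w)).
  { intro t. apply (continuity_pt_minus sig_ (fun _ => w)). apply sig_cont. apply continuity_pt_const; intros ? ?; auto. }
  assert (S1 : sig_ 1 = Lam) by (pose proof (sig_per 0); rewrite Rplus_0_l, sig_0 in H0; lra).
  destruct (IVT_cor _ 0 1 C ltac:(lra)) as [a [Ha Ea]].
  { rewrite sig_0, S1. nra. }
  exists (a + IZR k). rewrite sig_per_int. unfold w in Ea. lra.
Qed.

Definition rho v := proj1_sig (constructive_indefinite_description _ (sig_onto v)).
Lemma rho_spec v : sig_ (rho v) = v.
Proof. unfold rho; destruct constructive_indefinite_description; auto. Qed.

Lemma sig_inj a b : sig_ a = sig_ b -> a = b.
Proof.
  intro E. destruct (Rtotal_order a b) as [H|[H|H]]; auto.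
  pose proof (sig_lt a b H); lra. pose proof (sig_lt b a H); lra.
Qed.

Lemma rho_sig a : rho (sig_ a) = a.
Proof. apply sig_inj. apply rho_spec. Qed.

Lemma rho_lt v w : v < w -> rho v < rho w.
Proof.
  intro H. destruct (Rlt_le_dec (rho v) (rho w)); auto.
  pose proof (sig_le _ _ r). rewrite !rho_spec in H0. lra.
Qed.

Lemma rho_per v : rho (v + Lam) = rho v + 1.
Proof. apply sig_inj. rewrite sig_per, !rho_spec. auto. Qed.

Lemma rho_0 : rho 0 = 0.
Proof. apply sig_inj. rewrite rho_spec, sig_0; auto. Qed.


Definition c u := f (rho (Lam * u)).

Lemma c_len p q : p <= q -> rho (Lam * p) <= rho (Lam * q) /\ Len (rho (Lam * p)) (rho (Lam * q)) = Lam * (q - p).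
Proof.
  intro H. pose proof Lam_pos.
  assert (rho (Lam * p) <= rho (Lam * q)).
  { destruct (Rle_lt_or_eq_dec p q H). left; apply rho_lt; nra. subst; lra. }
  split; auto. rewrite <- sig_diff by auto. rewrite !rho_spec. ring.
Qed.

Lemma c_wrap p q : p <= q -> q < p + 1 -> rho (Lam * q) < rho (Lam * p) + 1.
Proof. intros. rewrite <- rho_per. apply rho_lt. pose proof Lam_pos. nra. Qed.

Lemma c_chord p q : p <= q -> vdist (c q) (c p) <= Lam * (q - p).
Proof. intro H. destruct (c_len p q H) as [H1 H2]. rewrite <- H2. apply Len_chord; auto. Qed.

Lemma c_lower p q : p <= q -> q < p + 1 -> Lam * (q - p) < tau ->
  (1 - (Lam * (q - p) / tau) * (Lam * (q - p) / tau)) * (Lam * (q - p)) <= vdist (c q) (c p).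
Proof.
  intros H1 H2 H3. destruct (c_len p q H1) as [Hr HL]. rewrite <- HL.
  apply Len_lower; auto. apply c_wrap; auto. lra.
Qed.

Lemma c_dir u0 w p q : 0 <= w -> w < 1 -> Lam * w < tau -> u0 <= p -> p <= q -> q <= u0 + w ->
  (1 - (Lam * w / tau) * (Lam * w / tau)) * vdist (c q) (c p) * vdist (c (u0 + w)) (c u0) <=
  vdot (vsub (c q) (c p)) (vsub (c (u0 + w)) (c u0)).
Proof.
  intros Hw0 Hw1 Hw2 H1 H2 H3.
  destruct (c_len u0 (u0 + w) ltac:(lra)) as [Hr HL].
  replace (Lam * w) with (Len (rho (Lam * u0)) (rho (Lam * (u0 + w)))) by (rewrite HL; ring).
  unfold c. apply loc_main.
  - apply c_wrap; lra.
  - apply Len_diam; auto.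
  - rewrite HL. replace (Lam * (u0 + w - u0)) with (Lam * w) by ring. auto.
  - destruct (c_len u0 p H1); auto.
  - destruct (c_len p q H2); auto.
  - destruct (c_len q (u0 + w) H3); auto.
Qed.

Definition D p q := vscale (/ (q - p)) (vsub (c q) (c p)).

Lemma D_sym p q : D p q = D q p.
Proof.
  destruct (Req_dec p q). subst; auto. unfold D.
  destruct (c q) as [[x1 x2] x3]; destruct (c p) as [[y1 y2] y3]; vunf.
  f_equal; [f_equal|]; field; lra.
Qed.

Lemma D_norm p q : p < q -> vnorm (D p q) = vdist (c q) (c p) / (q - p).
Proof.
  intro H. unfold D. rewrite vnorm_scale, Rabs_pos_eq. unfold vdist, Rdiv; ring.
  left; apply Rinv_0_lt_compat; lra.
Qed.

Lemma dot_scale a A b B : vdot (vscale a A) (vscale b B) = a * b * vdot A B.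
Proof. destruct A as [[x1 x2] x3]; destruct B as [[y1 y2] y3]; vunf; ring. Qed.

Lemma sub_sq X Y : vnorm (vsub X Y) * vnorm (vsub X Y) = vnorm X * vnorm X + vnorm Y * vnorm Y - 2 * vdot X Y.
Proof. rewrite !vnorm_sq. destruct X as [[x1 x2] x3]; destruct Y as [[y1 y2] y3]; vunf; ring. Qed.

Lemma D_bounds u0 w p q : 0 < w -> w < 1 -> Lam * w / tau <= 1/2 -> u0 <= p -> p < q -> q <= u0 + w ->
  (1 - (Lam * w / tau) * (Lam * w / tau)) * Lam <= vnorm (D p q) <= Lam.
Proof.
  intros Hw0 Hw1 Hs H1 H2 H3. pose proof Lam_pos.
  assert (Lam * w < tau). { apply Rmult_le_compat_r with (r := tau) in Hs; [|lra].
    unfold Rdiv in Hs; rewrite Rmult_assoc, Rinv_l, Rmult_1_r in Hs by lra. lra. }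
  rewrite D_norm by auto. split.
  - apply Rmult_le_reg_r with (q - p). lra.
    replace (vdist (c q) (c p) / (q - p) * (q - p)) with (vdist (c q) (c p)) by (field; lra).
    eapply Rle_trans. 2: apply c_lower; try lra. 2: nra.
    set (s := Lam * w / tau). set (s' := Lam * (q - p) / tau).
    assert (0 <= s' <= s).
    { unfold s, s', Rdiv. split. apply Rmult_le_pos. nra. left; apply Rinv_0_lt_compat; lra.
      apply Rmult_le_compat_r. left; apply Rinv_0_lt_compat; lra. nra. }
    assert (s' * s' <= s * s) by nra. assert (0 < Lam * (q - p)) by (apply Rmult_lt_0_compat; lra).
    replace ((1 - s * s) * Lam * (q - p)) with ((1 - s * s) * (Lam * (q - p))) by ring.
    apply Rmult_le_compat_r; lra.
  - apply Rmult_le_reg_r with (q - p). lra.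
    replace (vdist (c q) (c p) / (q - p) * (q - p)) with (vdist (c q) (c p)) by (field; lra).
    apply c_chord; lra.
Qed.

Lemma KEY1 u0 w p q : 0 < w -> w < 1 -> Lam * w / tau <= 1/2 -> u0 <= p -> p < q -> q <= u0 + w ->
  vnorm (vsub (D p q) (D u0 (u0 + w))) <= 2 * (Lam * w / tau) * Lam.
Proof.
  intros Hw0 Hw1 Hs H1 H2 H3. pose proof Lam_pos.
  assert (Lam * w < tau). { apply Rmult_le_compat_r with (r := tau) in Hs; [|lra].
    unfold Rdiv in Hs; rewrite Rmult_assoc, Rinv_l, Rmult_1_r in Hs by lra. lra. }
  assert (s0 : 0 <= Lam * w / tau) by (unfold Rdiv; apply Rmult_le_pos; [nra|left; apply Rinv_0_lt_compat; lra]).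
  pose proof (D_bounds u0 w p q Hw0 Hw1 Hs H1 H2 H3) as BX.
  pose proof (D_bounds u0 w u0 (u0 + w) Hw0 Hw1 Hs ltac:(lra) ltac:(lra) ltac:(lra)) as BY.
  pose proof (c_dir u0 w p q ltac:(lra) Hw1 H0 ltac:(lra) ltac:(lra) H3) as Dir.
  assert (DXY : vdot (D p q) (D u0 (u0 + w)) >= (1 - (Lam * w / tau) * (Lam * w / tau)) * vnorm (D p q) * vnorm (D u0 (u0 + w))).
  { unfold D at 1 2. rewrite dot_scale. rewrite !D_norm by lra.
    replace (u0 + w - u0) with w in * by ring.
    set (k := 1 - Lam * w / tau * (Lam * w / tau)) in *.
    assert (0 < / (q - p)) by (apply Rinv_0_lt_compat; lra). assert (0 < / w) by (apply Rinv_0_lt_compat; lra).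
    unfold Rdiv. apply Rle_ge.
    replace (k * (vdist (c q) (c p) * / (q - p)) * (vdist (c (u0 + w)) (c u0) * / w)) with
      ((/ (q - p) * / w) * (k * vdist (c q) (c p) * vdist (c (u0 + w)) (c u0))) by ring.
    apply Rmult_le_compat_l. nra. auto. }
  set (s := Lam * w / tau) in *. set (nX := vnorm (D p q)) in *. set (nY := vnorm (D u0 (u0 + w))) in *.
  set (d := vdot (D p q) (D u0 (u0 + w))) in *.
  pose proof (sub_sq (D p q) (D u0 (u0 + w))) as E. fold nX nY d in E.
  apply le_of_sq. nra. rewrite E.
  assert (0 <= nX) by (unfold nX; apply vnorm_ge0). assert (0 <= nY) by (unfold nY; apply vnorm_ge0).
  assert (s * s <= 1/4) by nra.
  assert (A1 : (nX - nY) * (nX - nY) <= (s * s * Lam) * (s * s * Lam)) by nra.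
  assert (A2 : nX * nY <= Lam * Lam) by nra.
  assert (A3 : nX * nX + nY * nY - 2 * d <= (nX - nY) * (nX - nY) + 2 * (s * s) * (nX * nY)) by nra.
  assert (A4 : (s * s * Lam) * (s * s * Lam) <= s * s * (Lam * Lam)).
  { replace ((s * s * Lam) * (s * s * Lam)) with ((s * s) * (s * s * (Lam * Lam))) by ring.
    assert (0 <= s * s * (Lam * Lam)) by nra. nra. }
  assert (0 <= s * s) by nra.
  nra.
Qed.


Definition w0 := Rmin (1/2) (tau / (2 * Lam)).
Lemma w0_spec : 0 < w0 /\ w0 < 1 /\ forall w, 0 <= w <= w0 -> Lam * w / tau <= 1/2.
Proof.
  pose proof Lam_pos. unfold w0. split. apply Rmin_glb_lt. lra. apply Rdiv_lt_0_compat; lra.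
  split. pose proof (Rmin_l (1/2) (tau / (2 * Lam))). lra.
  intros w Hw. pose proof (Rmin_r (1/2) (tau / (2 * Lam))).
  assert (w <= tau / (2 * Lam)) by lra.
  apply Rmult_le_reg_r with tau; auto. unfold Rdiv at 1. rewrite Rmult_assoc, Rinv_l, Rmult_1_r by lra.
  apply Rmult_le_compat_l with (r := Lam) in H1; [|lra].
  replace (Lam * (tau / (2 * Lam))) with (tau / 2) in H1 by (field; lra). lra.
Qed.

Definition Mc := 4 * Lam * Lam / tau.
Lemma Mc_pos : 0 < Mc.
Proof. pose proof Lam_pos. unfold Mc. apply Rdiv_lt_0_compat; nra. Qed.

Lemma vsub_tri X Y W : vnorm (vsub X Y) <= vnorm (vsub X W) + vnorm (vsub Y W).
Proof.
  replace (vsub X Y) with (vadd (vsub X W) (vsub W Y)).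
  replace (vnorm (vsub Y W)) with (vnorm (vsub W Y)). apply vnorm_tri.
  apply vdist_sym.
  destruct X as [[x1 x2] x3]; destruct Y as [[y1 y2] y3]; destruct W as [[z1 z2] z3]; vunf; f_equal; [f_equal|]; ring.
Qed.

Lemma KEY2 u0 w p q p' q' : 0 < w -> w <= w0 -> u0 <= p -> p < q -> q <= u0 + w ->
  u0 <= p' -> p' < q' -> q' <= u0 + w ->
  vnorm (vsub (D p q) (D p' q')) <= Mc * w.
Proof.
  intros. destruct w0_spec as [A1 [A2 A3]]. specialize (A3 w ltac:(lra)).
  pose proof (KEY1 u0 w p q H ltac:(lra) A3 H1 H2 H3).
  pose proof (KEY1 u0 w p' q' H ltac:(lra) A3 H4 H5 H6).
  eapply Rle_trans. apply (vsub_tri _ _ (D u0 (u0 + w))).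
  unfold Mc. replace (4 * Lam * Lam / tau * w) with (2 * (Lam * w / tau) * Lam + 2 * (Lam * w / tau) * Lam) by (field; lra).
  lra.
Qed.

Lemma small_inv del : 0 < del -> exists N, forall n, (N <= n)%nat -> / (INR n + 1) < del.
Proof.
  intro H. destruct (archimed (/ del)) as [A1 A2].
  exists (Z.to_nat (up (/ del))). intros n Hn.
  assert (0 < / del) by (apply Rinv_0_lt_compat; auto).
  assert (IZR (up (/ del)) <= INR n).
  { rewrite INR_IZR_INZ. apply IZR_le. apply le_IZR. assert (0 <= IZR (up (/del))) by lra.
    apply IZR_le. apply Nat2Z.inj_le in Hn. rewrite Z2Nat.id in Hn. lia. apply le_IZR; lra. }
  assert (/ del < INR n + 1) by lra.
  rewrite <- (Rinv_inv del). apply Rinv_lt_contravar. apply Rmult_lt_0_compat; lra. auto.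
Qed.

Definition seqD u n := D u (u + / (INR n + 1)).

Lemma inv_pos n : 0 < / (INR n + 1).
Proof. apply Rinv_0_lt_compat. pose proof (pos_INR n). lra. Qed.

Lemma seq_close u del : 0 < del -> del <= w0 -> exists N, forall n m, (N <= n)%nat -> (N <= m)%nat ->
  vnorm (vsub (seqD u n) (seqD u m)) <= Mc * del.
Proof.
  intros H1 H2. destruct (small_inv del H1) as [N HN]. exists N. intros n m Hn Hm.
  specialize (HN n Hn) as E1. specialize (HN m Hm) as E2. pose proof (inv_pos n); pose proof (inv_pos m).
  apply (KEY2 u del); lra.
Qed.

Lemma coord_sub_le X Y : Rabs (px X - px Y) <= vnorm (vsub X Y) /\ Rabs (py X - py Y) <= vnorm (vsub X Y) /\
  Rabs (pz X - pz Y) <= vnorm (vsub X Y).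
Proof. exact (coord_le (vsub X Y)). Qed.

Lemma seq_cauchy (pr : point -> R) u : (forall X Y, Rabs (pr X - pr Y) <= vnorm (vsub X Y)) ->
  ex_finite_lim_seq (fun n => pr (seqD u n)).
Proof.
  intro Hpr. apply ex_lim_seq_cauchy_corr. intros [eps He].
  destruct w0_spec as [A1 _]. pose proof Mc_pos.
  set (del := Rmin w0 (eps / (2 * Mc))).
  assert (0 < del) by (apply Rmin_glb_lt; auto; apply Rdiv_lt_0_compat; lra).
  destruct (seq_close u del H0 (Rmin_l _ _)) as [N HN]. exists N. intros n m Hn Hm. simpl.
  eapply Rle_lt_trans. apply Hpr. eapply Rle_lt_trans. apply HN; auto.
  pose proof (Rmin_r w0 (eps / (2 * Mc))). fold del in H1.
  apply Rmult_le_compat_l with (r := Mc) in H1; [|lra].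
  replace (Mc * (eps / (2 * Mc))) with (eps / 2) in H1 by (field; lra). lra.
Qed.

Definition cd u : point :=
  (real (Lim_seq (fun n => px (seqD u n))), real (Lim_seq (fun n => py (seqD u n))),
   real (Lim_seq (fun n => pz (seqD u n)))).

Lemma lim_bound U l x r : is_lim_seq U (Finite l) -> (exists N, forall n, (N <= n)%nat -> Rabs (U n - x) <= r) ->
  Rabs (l - x) <= r.
Proof.
  intros HL [N HN]. destruct (Rle_dec (Rabs (l - x)) r) as [|Hn]; auto. exfalso.
  apply is_lim_seq_spec in HL. assert (He : 0 < Rabs (l - x) - r) by lra.
  destruct (HL (mkposreal _ He)) as [N' HN']. simpl in HN'.
  specialize (HN (max N N') (Nat.le_max_l _ _)). specialize (HN' (max N N') (Nat.le_max_r _ _)).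
  pose proof (Rabs_triang (l - U (max N N')) (U (max N N') - x)).
  replace (l - U (max N N') + (U (max N N') - x)) with (l - x) in H by ring.
  rewrite Rabs_minus_sym in HN'. lra.
Qed.

Lemma cd_coord_bound (pr : point -> R) u h : (forall X Y, Rabs (pr X - pr Y) <= vnorm (vsub X Y)) ->
  is_lim_seq (fun n => pr (seqD u n)) (Finite (pr (cd u))) ->
  0 < Rabs h -> 2 * Rabs h <= w0 ->
  Rabs (pr (D u (u + h)) - pr (cd u)) <= Mc * (2 * Rabs h).
Proof.
  intros Hpr HL Hh Hw. rewrite Rabs_minus_sym.
  apply (lim_bound _ _ _ _ HL).
  destruct (small_inv (Rabs h) Hh) as [N HN]. exists N. intros n Hn.
  eapply Rle_trans. apply Hpr. specialize (HN n Hn). pose proof (inv_pos n).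
  unfold seqD. destruct (Rle_dec 0 h).
  - rewrite Rabs_pos_eq in * by auto. apply (KEY2 (u - h) (2 * h)); lra.
  - rewrite Rabs_left in * by lra. rewrite (D_sym u (u + h)). apply (KEY2 (u + h) (2 * - h)); lra.
Qed.

Lemma cd_lim_x u : is_lim_seq (fun n => px (seqD u n)) (Finite (px (cd u))).
Proof.
  destruct (seq_cauchy px u (fun X Y => proj1 (coord_sub_le X Y))) as [l Hl].
  change (px (cd u)) with (real (Lim_seq (fun n => px (seqD u n)))).
  rewrite (is_lim_seq_unique _ _ Hl). simpl. auto.
Qed.


Lemma cd_lim_y u : is_lim_seq (fun n => py (seqD u n)) (Finite (py (cd u))).
Proof.
  destruct (seq_cauchy py u (fun X Y => proj1 (proj2 (coord_sub_le X Y)))) as [l Hl].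
  change (py (cd u)) with (real (Lim_seq (fun n => py (seqD u n)))).
  rewrite (is_lim_seq_unique _ _ Hl). simpl. auto.
Qed.

Lemma cd_lim_z u : is_lim_seq (fun n => pz (seqD u n)) (Finite (pz (cd u))).
Proof.
  destruct (seq_cauchy pz u (fun X Y => proj2 (proj2 (coord_sub_le X Y)))) as [l Hl].
  change (pz (cd u)) with (real (Lim_seq (fun n => pz (seqD u n)))).
  rewrite (is_lim_seq_unique _ _ Hl). simpl. auto.
Qed.

Lemma px_sub X Y : px (vsub X Y) = px X - px Y. Proof. reflexivity. Qed.
Lemma py_sub X Y : py (vsub X Y) = py X - py Y. Proof. reflexivity. Qed.
Lemma pz_sub X Y : pz (vsub X Y) = pz X - pz Y. Proof. reflexivity. Qed.

Lemma D_cd u h : 0 < Rabs h -> 2 * Rabs h <= w0 ->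
  vnorm (vsub (D u (u + h)) (cd u)) <= 3 * (Mc * (2 * Rabs h)).
Proof.
  intros H1 H2. eapply Rle_trans. apply vnorm_le_sum.
  pose proof (cd_coord_bound px u h (fun X Y => proj1 (coord_sub_le X Y)) (cd_lim_x u) H1 H2).
  pose proof (cd_coord_bound py u h (fun X Y => proj1 (proj2 (coord_sub_le X Y))) (cd_lim_y u) H1 H2).
  pose proof (cd_coord_bound pz u h (fun X Y => proj2 (proj2 (coord_sub_le X Y))) (cd_lim_z u) H1 H2).
  rewrite px_sub, py_sub, pz_sub. lra.
Qed.

Lemma c_deriv (pr : point -> R) t :
  (forall a X, pr (vscale a X) = a * pr X) -> (forall X Y, pr (vsub X Y) = pr X - pr Y) ->
  (forall X Y, Rabs (pr X - pr Y) <= vnorm (vsub X Y)) ->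
  derivable_pt_lim (fun u => pr (c u)) t (pr (cd t)).
Proof.
  intros Hs Hsub Hle eps He. destruct w0_spec as [A1 _]. pose proof Mc_pos.
  set (del := Rmin (w0 / 2) (eps / (6 * Mc + 1))).
  assert (Hd : 0 < del) by (apply Rmin_glb_lt; apply Rdiv_lt_0_compat; lra).
  exists (mkposreal _ Hd). intros h Hh0 Hh. simpl in Hh.
  pose proof (Rmin_l (w0/2) (eps / (6 * Mc + 1))); pose proof (Rmin_r (w0/2) (eps / (6 * Mc + 1))). fold del in H0, H1.
  assert (0 < Rabs h) by (apply Rabs_pos_lt; auto).
  pose proof (D_cd t h H2 ltac:(lra)).
  replace ((pr (c (t + h)) - pr (c t)) / h) with (pr (D t (t + h))).
  eapply Rle_lt_trans. apply Hle. eapply Rle_lt_trans. apply H3.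
  assert (Rabs h < eps / (6 * Mc + 1)) by lra.
  apply Rmult_lt_compat_l with (r := 6 * Mc + 1) in H4; [|lra].
  replace ((6 * Mc + 1) * (eps / (6 * Mc + 1))) with eps in H4 by (field; lra).
  assert (0 <= Rabs h) by apply Rabs_pos. nra.
  unfold D. rewrite Hs, Hsub. replace (t + h - t) with h by ring. unfold Rdiv; ring.
Qed.

Lemma lim0 X Y C h0 : 0 < h0 -> 0 <= C -> (forall h, 0 < h -> h <= h0 -> X <= Y + C * h) -> X <= Y.
Proof.
  intros H0 HC H. apply Rle_plus_epsilon. intros eps He.
  set (h := Rmin h0 (eps / (C + 1))).
  assert (0 < h) by (apply Rmin_glb_lt; auto; apply Rdiv_lt_0_compat; lra).
  specialize (H h H1 (Rmin_l _ _)). pose proof (Rmin_r h0 (eps / (C + 1))). fold h in H2.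
  apply Rmult_le_compat_l with (r := C) in H2; auto.
  assert (C * (eps / (C + 1)) <= eps).
  { apply Rmult_le_reg_r with (C + 1). lra. replace (C * (eps / (C + 1)) * (C + 1)) with (C * eps) by (field; lra). nra. }
  lra.
Qed.

Lemma cd_norm u : vnorm (cd u) = Lam.
Proof.
  destruct w0_spec as [A1 [A2 A3]]. pose proof Mc_pos. pose proof Lam_pos.
  assert (B : forall h, 0 < h -> h <= w0 / 2 ->
     (1 - (Lam * h / tau) * (Lam * h / tau)) * Lam <= vnorm (D u (u + h)) <= Lam /\
     vnorm (vsub (D u (u + h)) (cd u)) <= 6 * Mc * h).
  { intros h H1 H2. split. apply (D_bounds u h); try lra. apply A3; lra.
    pose proof (D_cd u h). rewrite Rabs_pos_eq in H3 by lra. specialize (H3 H1 ltac:(lra)). lra. }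
  assert (T : forall X Y, vnorm X <= vnorm Y + vnorm (vsub X Y) /\ vnorm Y <= vnorm X + vnorm (vsub X Y)).
  { intros X Y. split.
    - replace X with (vadd Y (vsub X Y)) at 1. apply vnorm_tri.
      destruct X as [[x1 x2] x3]; destruct Y as [[y1 y2] y3]; vunf; f_equal; [f_equal|]; ring.
    - replace Y with (vadd X (vscale (-1) (vsub X Y))) at 1.
      eapply Rle_trans. apply vnorm_tri. rewrite vnorm_scale. assert (R1 : Rabs (-1) = 1) by (rewrite Rabs_left; lra). rewrite R1. lra.
      destruct X as [[x1 x2] x3]; destruct Y as [[y1 y2] y3]; vunf; f_equal; [f_equal|]; ring. }
  apply Rle_antisym.
  - apply (lim0 _ _ (6 * Mc) (w0 / 2)); try lra. intros h H1 H2. destruct (B h H1 H2) as [[_ B1] B2].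
    destruct (T (cd u) (D u (u + h))) as [T1 _]. assert (vnorm (vsub (cd u) (D u (u+h))) = vnorm (vsub (D u (u+h)) (cd u))) by apply vdist_sym. lra.
  - apply (lim0 _ _ (6 * Mc + Lam * Lam * Lam * (w0 / 2) / (tau * tau)) (w0 / 2)); try lra.
    + assert (0 <= Lam * Lam * Lam * (w0 / 2) / (tau * tau)).
      { apply Rmult_le_pos. apply Rmult_le_pos; [|lra]. nra. left; apply Rinv_0_lt_compat; nra. } lra.
    + intros h H1 H2. destruct (B h H1 H2) as [[B1 _] B2].
      destruct (T (D u (u + h)) (cd u)) as [T1 _].
      assert (E : (1 - Lam * h / tau * (Lam * h / tau)) * Lam = Lam - (Lam * Lam * Lam * h / (tau * tau)) * h) by (field; lra).
      assert (Lam * Lam * Lam * h / (tau * tau) <= Lam * Lam * Lam * (w0 / 2) / (tau * tau)).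
      { unfold Rdiv. apply Rmult_le_compat_r. left; apply Rinv_0_lt_compat; nra. apply Rmult_le_compat_l; [|lra].
        assert (0 < Lam * Lam) by nra. nra. }
      assert (0 < h) by lra. nra.
Qed.


Lemma cd_lip_small u u' : u < u' -> u' - u <= w0 / 2 -> vnorm (vsub (cd u) (cd u')) <= Mc * (u' - u).
Proof.
  intros H1 H2. destruct w0_spec as [A1 [A2 A3]]. pose proof Mc_pos.
  apply (lim0 _ _ (13 * Mc) (w0 / 4)); try lra. intros h Hh1 Hh2.
  pose proof (D_cd u h) as E1. pose proof (D_cd u' h) as E2. rewrite Rabs_pos_eq in E1, E2 by lra.
  specialize (E1 Hh1 ltac:(lra)). specialize (E2 Hh1 ltac:(lra)).
  pose proof (KEY2 u (u' - u + h) u (u + h) u' (u' + h) ltac:(lra) ltac:(lra) ltac:(lra) ltac:(lra) ltac:(lra) ltac:(lra) ltac:(lra) ltac:(lra)) as K.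
  pose proof (vsub_tri (cd u) (cd u') (D u (u + h))) as T1.
  pose proof (vsub_tri (cd u') (D u (u + h)) (D u' (u' + h))) as T2.
  assert (S1 : vnorm (vsub (cd u) (D u (u + h))) = vnorm (vsub (D u (u + h)) (cd u))) by apply vdist_sym.
  assert (S2 : vnorm (vsub (cd u') (D u' (u' + h))) = vnorm (vsub (D u' (u' + h)) (cd u'))) by apply vdist_sym.
  assert (S3 : vnorm (vsub (D u (u + h)) (D u' (u' + h))) = vnorm (vsub (D u (u + h)) (D u' (u' + h)))) by auto.
  lra.
Qed.

Definition Kc := Mc + 4 * Lam / w0.

Lemma cd_lip s t : vdist (cd s) (cd t) <= Kc * Rabs (s - t).
Proof.
  destruct w0_spec as [A1 [A2 A3]]. pose proof Mc_pos. pose proof Lam_pos.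
  assert (G : forall u u', u <= u' -> vnorm (vsub (cd u) (cd u')) <= Kc * (u' - u)).
  { intros u u' Hu. unfold Kc. assert (0 <= 4 * Lam / w0) by (apply Rdiv_le_0_compat; lra).
    destruct (Rle_lt_or_eq_dec u u' Hu) as [Hlt|Heq].
    - destruct (Rle_dec (u' - u) (w0 / 2)).
      + pose proof (cd_lip_small u u' Hlt r). nra.
      + pose proof (vsub_tri (cd u) (cd u') (0,0,0)).
        replace (vsub (cd u) (0,0,0)) with (cd u) in H2 by (destruct (cd u) as [[x1 x2] x3]; vunf; f_equal; [f_equal|]; ring).
        replace (vsub (cd u') (0,0,0)) with (cd u') in H2 by (destruct (cd u') as [[x1 x2] x3]; vunf; f_equal; [f_equal|]; ring).
        rewrite !cd_norm in H2.
        assert (2 * Lam <= 4 * Lam / w0 * (u' - u)).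
        { replace (4 * Lam / w0 * (u' - u)) with (2 * Lam * ((u' - u) / (w0 / 2))) by (field; lra).
          assert (1 <= (u' - u) / (w0 / 2)).
          { apply Rmult_le_reg_r with (w0 / 2). lra. replace ((u' - u) / (w0 / 2) * (w0 / 2)) with (u' - u) by (field; lra). lra. }
          nra. }
        nra.
    - subst. rewrite vsub_self. unfold vnorm, vdot, px, py, pz; simpl.
      replace (0 * 0 + 0 * 0 + 0 * 0) with 0 by ring. rewrite sqrt_0. lra. }
  unfold vdist. destruct (Rle_dec s t).
  - rewrite Rabs_left1 by lra. replace (- (s - t)) with (t - s) by ring. apply G; auto.
  - rewrite Rabs_pos_eq by lra. replace (vnorm (vsub (cd s) (cd t))) with (vnorm (vsub (cd t) (cd s))) by apply vdist_sym. apply G; lra.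
Qed.

Lemma rho_range s : 0 <= s < 1 -> 0 <= rho (Lam * s) < 1.
Proof.
  intro H. pose proof Lam_pos. pose proof rho_0.
  assert (rho Lam = 1) by (pose proof (rho_per 0); rewrite Rplus_0_l, rho_0 in H2; lra).
  split.
  - destruct (Rle_lt_or_eq_dec 0 s (proj1 H)). left. rewrite <- H1. apply rho_lt. nra. subst. rewrite Rmult_0_r. lra.
  - rewrite <- H2. apply rho_lt. nra.
Qed.

Lemma comp_C11 : component_C11 f.
Proof.
  pose proof Lam_pos.
  exists c, cd. split; [|split; [|split; [|split; [|split]]]].
  - intro t. unfold c. rewrite Rmult_plus_distr_l, Rmult_1_r, rho_per, fper. auto.
  - intros s t Hs Ht E. unfold c in E. apply finj in E; try apply rho_range; auto.
    apply (f_equal sig_) in E. rewrite !rho_spec in E. apply Rmult_eq_reg_l in E; lra.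
  - intro x. split.
    + intros [s ->]. exists (sig_ s / Lam). unfold c. replace (Lam * (sig_ s / Lam)) with (sig_ s) by (field; lra).
      rewrite rho_sig. auto.
    + intros [t ->]. exists (rho (Lam * t)). auto.
  - intro t. split; [|split]; apply is_derive_Reals; apply c_deriv; intros; try reflexivity.
    exact (proj1 (coord_sub_le X Y)). exact (proj1 (proj2 (coord_sub_le X Y))). exact (proj2 (proj2 (coord_sub_le X Y))).
  - exists Lam. apply cd_norm.
  - exists Kc. apply cd_lip.
Qed.

End Curve.


Theorem lemma4 (n : nat) (g : nat -> R -> point) (tau : R) :
  is_link n g ->
  thickness n g = Finite tau ->
  0 < tau ->
  (forall (i j : nat) (s s' t t' : R),
      (i < n)%nat -> (j < n)%nat ->
      0 <= s < 1 -> 0 <= s' < 1 -> 0 <= t < 1 -> 0 <= t' < 1 ->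
      g i s <> g j t -> g i s' <> g j t' ->
      Rbar_le (Finite (rp2_dist (secant (g i s) (g j t)) (secant (g i s') (g j t'))))
              (Rbar_mult (Finite (/ (2 * tau)))
                         (Rbar_plus (arc_dist (g i) s s') (arc_dist (g j) t t')))) /\
  (forall i, (i < n)%nat -> component_C11 (g i)).
Proof.
  intros Hl Ht Hp. split.
  - apply part1; auto.
  - intros i Hi. destruct Hl as [Hl _]. destruct (Hl i Hi) as [Hc [Hper Hinj]].
    apply (comp_C11 (g i) tau Hp Hc Hper Hinj).
    intros x y z. apply (HK n g tau Ht); [exists i, x | exists i, y | exists i, z]; auto.
Qed.
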